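(* Let $T$ be a balanced tree with a proper 2-coloring $\chi:V\to\{\mathcal{R},\mathcal{B}\}$ in which all leaves are blue, and suppose $\mathrm{height}(T)\ge 4$. Then $T$ has two minimal RD-sets of different sizes, and $T$ is mixed.
   Context: $N(D)=\bigcup_{v\in D}\{u:uv\in E\}$. A leaf is a vertex of degree 1; the height of a vertex is its minimum distance to a leaf; $\mathrm{height}(T)$ is the maximum height of a vertex; $T$ is balanced if no two adjacent vertices have the same height. A proper 2-coloring gives adjacent vertices different colors. An RD-set (red-dominating set) is $D\subseteq V$ with $N(D)=\chi^{-1}(\mathcal{R})$; it is minimal if no proper subset is an RD-set. A TD-set is $D$ with $N(D)=V$, minimal if no proper subset is a TD-set; $T$ is mixed if not all minimal TD-sets have the same size. *)

(* Defs.v *)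
From mathcomp Require Import all_boot.
Set Implicit Arguments. Unset Strict Implicit. Unset Printing Implicit Defensive.

(* A simple graph: vertex set a finType T, adjacency e : rel T,
   assumed symmetric and irreflexive in the theorem. *)

Section Graphs.
Variables (T : finType) (e : rel T).

Definition nbhd (D : {set T}) : {set T} :=
  [set u | [exists v in D, e u v]].

Definition degree (v : T) : nat := #|[set u | e v u]|.

Definition leaf (v : T) : bool := degree v == 1.

Definition connected : Prop := forall x y : T, connect e x y.

Definition acyclic : Prop :=
  forall c : seq T, uniq c -> 2 < size c -> ~~ cycle e c.

Definition is_tree : Prop := connected /\ acyclic.

Definition is_height (v : T) (k : nat) : Prop :=
  (exists p : seq T, [/\ path e v p, leaf (last v p) & size p = k]) /\
  (forall p : seq T, path e v p -> leaf (last v p) -> k <= size p).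

Definition tree_height_ge (n : nat) : Prop :=
  exists v k, is_height v k /\ n <= k.

Definition balanced : Prop :=
  forall u v k, e u v -> is_height u k -> ~ is_height v k.

(* 2-colorings are chi : T -> bool with  true = red (R), false = blue (B) *)
Definition proper_2coloring (chi : T -> bool) : Prop :=
  forall u v, e u v -> chi u != chi v.

Definition red_set (chi : T -> bool) : {set T} := [set v | chi v].

Definition RD_set (chi : T -> bool) (D : {set T}) : Prop :=
  nbhd D = red_set chi.

Definition minimal_RD_set (chi : T -> bool) (D : {set T}) : Prop :=
  RD_set chi D /\ forall D' : {set T}, D' \proper D -> ~ RD_set chi D'.

Definition TD_set (D : {set T}) : Prop := nbhd D = [set: T].

Definition minimal_TD_set (D : {set T}) : Prop :=
  TD_set D /\ forall D' : {set T}, D' \proper D -> ~ TD_set D'.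

Definition mixed : Prop :=
  exists D1 D2, [/\ minimal_TD_set D1, minimal_TD_set D2 & #|D1| != #|D2|].

End Graphs.

(* Main.v *)
Require Import Defs.
From mathcomp Require Import all_boot.
From Stdlib Require Import Classical.
Set Implicit Arguments. Unset Strict Implicit. Unset Printing Implicit Defensive.


Section Dist.
Variables (T : finType) (e : rel T) (A : {set T}).

Fixpoint W (n : nat) : {set T} :=
  if n is n'.+1 then [set v | [exists u in W n', e v u]] else A.

Lemma WP n v : reflect (exists p, [/\ path e v p, last v p \in A & size p = n]) (v \in W n).
Proof.
elim: n v => [|n IH] v /=.
  apply: (iffP idP) => [vA|[p [_ lA sz]]]; first by exists [::].
  by case: p sz lA => [|//] _.
rewrite inE; apply: (iffP existsP) => [[u /andP[/IH [p [pp lp sp]] evu]]|[[|u p] [pp lp sp]]]//.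
  by exists (u :: p); rewrite /= evu pp lp sp.
move: pp => /= /andP[evu pp]; exists u; rewrite evu andbT; apply/IH.
by exists p; split => //; case: sp.
Qed.

Variable reach : forall v, exists n, v \in W n.

Definition d v := ex_minn (reach v).

Lemma d_W v : v \in W (d v).
Proof. by rewrite /d; case: ex_minnP. Qed.

Lemma d_min v n : v \in W n -> d v <= n.
Proof. by rewrite /d; case: ex_minnP => m _ H /H. Qed.

Lemma d_walk v p : path e v p -> last v p \in A -> d v <= size p.
Proof. by move=> pp lp; apply: d_min; apply/WP; exists p. Qed.

Lemma d_walk_ex v : exists p, [/\ path e v p, last v p \in A & size p = d v].
Proof. exact/WP/(d_W v). Qed.

Lemma d0 v : (d v == 0) = (v \in A).
Proof.
apply/idP/idP => [/eqP H|vA]; first by have := d_W v; rewrite H.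
by rewrite -leqn0; apply: d_min.
Qed.

Lemma d_lip u v : e u v -> d u <= (d v).+1.
Proof.
move=> euv; apply: d_min; rewrite /= inE; apply/existsP; exists v.
by rewrite d_W euv.
Qed.

Lemma d_desc v : 0 < d v -> exists w, e v w /\ (d w).+1 = d v.
Proof.
move=> H; have := d_W v; case E: (d v) H => [//|n] _ /=.
rewrite inE => /existsP [w /andP [wW evw]]; exists w; split => //.
have := d_min wW; have := d_lip evw; rewrite E.
move=> h1 h2; apply/eqP; rewrite eqSS eqn_leq h2; exact: h1.
Qed.

Lemma d_walk_all v p : path e v p -> last v p \in A ->
  forall w, w \in v :: p -> d w <= size p.
Proof.
elim: p v => [|y p IH] v /=.
  by move=> _ lA w; rewrite inE => /eqP ->; rewrite leqn0 d0.
move=> /andP[evy pp] lp w; rewrite inE => /orP [/eqP ->|wp].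
  by apply: (@d_walk v (y :: p)) => //=; rewrite evy.
exact: leqW (IH y pp lp w wp).
Qed.

End Dist.


Section Tree.
Variables (T : finType) (e : rel T).
Hypothesis e_sym : symmetric e.

Lemma rev_walk x p : path e x p ->
  exists q, [/\ path e (last x p) q, last (last x p) q = x & {subset q <= x :: p}].
Proof.
move=> pp; exists (rev (belast x p)); split.
- rewrite rev_path; apply: sub_path pp => a b; by rewrite e_sym.
- case: p {pp} => [|y p] //=; by rewrite rev_cons last_rcons.
- by move=> z; rewrite mem_rev => /mem_belast.
Qed.

Variable chi : T -> bool.
Hypothesis Hproper : forall u v, e u v -> chi u != chi v.

Lemma chi_walk x p : path e x p -> chi (last x p) = chi x (+) odd (size p).
Proof.
elim: p x => [|y p IH] x /=; first by rewrite addbF.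
move=> /andP[exy pp]; rewrite IH //.
have := Hproper exy; case: (chi x); case: (chi y) => //= _; by case: (odd _).
Qed.

Variable rho : T.
Hypothesis conn : forall x y, connect e x y.

Lemma reach_root v : exists n, v \in W e [set rho] n.
Proof.
have /connectP [p pp lp] := conn v rho.
exists (size p); apply/WP; exists p; split => //; by rewrite -lp inE.
Qed.

Definition dp := d reach_root.

Lemma dp0_root v : (dp v == 0) = (v == rho).
Proof. by rewrite /dp d0 inE. Qed.

Lemma chi_dp v : chi v = chi rho (+) odd (dp v).
Proof.
have [p [pp lp sp]] := d_walk_ex reach_root v.
move: lp; rewrite inE => /eqP lp.
have := chi_walk pp; rewrite lp sp -/dp => ->.
by rewrite -addbA addbb addbF.
Qed.

Lemma dp_adj u v : e u v -> dp u = (dp v).+1 \/ dp v = (dp u).+1.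
Proof.
move=> euv; have h1 := d_lip reach_root euv.
have h2 : dp v <= (dp u).+1 by apply: (d_lip reach_root); rewrite e_sym.
have := Hproper euv; rewrite (chi_dp u) (chi_dp v) -/dp.
case: (ltngtP (dp u) (dp v)) => H.
- by right; apply/eqP; rewrite eqn_leq h2 H.
- by left; apply/eqP; rewrite eqn_leq h1 H.
- by rewrite H eqxx.
Qed.

Hypothesis acyc : forall c : seq T, uniq c -> 2 < size c -> ~~ cycle e c.

Lemma par_uniq v a b : e v a -> e v b -> (dp a).+1 = dp v -> (dp b).+1 = dp v -> a = b.
Proof.
move=> eva evb da db; apply/eqP; apply/negPn/negP => nab.
have [pa [ppa lpa spa]] := d_walk_ex reach_root a.
have [pb [ppb lpb spb]] := d_walk_ex reach_root b.
change (size pa = dp a) in spa; change (size pb = dp b) in spb.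
move: lpa lpb; rewrite !inE => /eqP lpa /eqP lpb.
have [q [pq lq sq]] := rev_walk ppb.
rewrite lpb in pq lq.
have pw : path e a (pa ++ q) by rewrite cat_path ppa lpa pq.
have lw : last a (pa ++ q) = b by rewrite last_cat lpa.
move: lw; case: (shortenP pw) => p' pp' up' sub' lp'.
have small : forall w, w \in a :: p' -> dp w < dp v.
  move=> w; rewrite inE => /orP [/eqP ->|]; first by rewrite -da.
  move=> /sub' ; rewrite mem_cat => /orP [wpa|wq].
    rewrite -da ltnS -spa; apply: (d_walk_all reach_root ppa) => //; first by rewrite lpa inE.
    by rewrite inE wpa orbT.
  rewrite -db ltnS -spb; apply: (d_walk_all reach_root ppb) => //; first by rewrite lpb inE.
  exact: sq.
have vnot : v \notin a :: p'.
  by apply/negP => /small; rewrite ltnn.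
have := acyc (c := v :: a :: p').
have uc : uniq (v :: a :: p') by rewrite cons_uniq vnot up'.
move=> /(_ uc) {uc}.
case: p' pp' up' sub' lp' small vnot => [|z p''] pp' up' sub' lp' small vnot.
  by move: lp' => /= lp'; rewrite lp' eqxx in nab.
move=> /(_ isT); rewrite /cycle rcons_path /= eva.
move: pp' => /= /andP[-> ->] /=.
move: lp' => /= ->; by rewrite e_sym evb.
Qed.

End Tree.


Lemma minimal_sub (T : finType) (Pr : {set T} -> Prop) (S : {set T}) :
  Pr S -> exists M : {set T}, [/\ M \subset S, Pr M & forall M' : {set T}, M' \proper M -> ~ Pr M'].
Proof.
move: {2}#|S| (leqnn #|S|) => n; elim: n S => [|n IH] S.
  rewrite leqn0 => /eqP S0 PS; exists S; split => // M' /proper_card; by rewrite S0.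
move=> Sn PS.
case: (classic (exists M' : {set T}, M' \proper S /\ Pr M')) => [[M' [MS PM]]|H].
  have := IH M'; case.
  - by rewrite -ltnS; apply: leq_trans Sn; apply: proper_card.
  - by [].
  move=> M [MM' PM0 HM]; exists M; split => //.
  by apply: subset_trans MM' (proper_sub MS).
exists S; split => // M' MS PM; apply: H; by exists M'.
Qed.

Section Leaf.
Variables (T : finType) (e : rel T).

Lemma leaf_uniq v a b : leaf e v -> e v a -> e v b -> a = b.
Proof.
rewrite /leaf /degree => /cards1P [z Hz] ha hb.
have : a \in [set u | e v u] by rewrite inE.
have : b \in [set u | e v u] by rewrite inE.
by rewrite Hz !inE => /eqP -> /eqP ->.
Qed.

Lemma nonleaf_two v a : ~~ leaf e v -> e v a -> exists b, e v b /\ b != a.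
Proof.
move=> nl ha; case: (classic (exists b, e v b /\ b != a)) => // H; exfalso.
move: nl; rewrite /leaf /degree; apply/negP/negPn/cards1P; exists a.
apply/setP => u; rewrite !inE; apply/idP/idP => [hu|/eqP ->//].
apply/negP => /negP nua; apply: H; by exists u.
Qed.
End Leaf.


Section Main.
Variables (T : finType) (e : rel T).
Hypothesis e_sym : symmetric e.
Hypothesis conn : forall x y : T, connect e x y.
Hypothesis acyc : forall c : seq T, uniq c -> 2 < size c -> ~~ cycle e c.
Variable chi : T -> bool.
Hypothesis Hproper : forall u v, e u v -> chi u != chi v.
Hypothesis Hleaves : forall v, leaf e v -> chi v = false.
Hypothesis noiso : forall v, exists u, e v u.
Variables x0 x1 x2 x3 x4 : T.
Hypotheses (e01 : e x0 x1) (e12 : e x1 x2) (e23 : e x2 x3) (e34 : e x3 x4).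
Hypothesis leaf0 : leaf e x0.
Hypotheses (n13 : x1 != x3) (n24 : x2 != x4) (n02 : x0 != x2).
Hypothesis R1 : forall r y, e x4 r -> e r y -> ~~ leaf e y.

Let dp := dp x3 conn.
Definition par v := odflt v [pick w | e v w && ((dp w).+1 == dp v)].

Lemma par_spec v : 0 < dp v -> e v (par v) /\ (dp (par v)).+1 = dp v.
Proof.
move=> H; have [w [evw dw]] := d_desc H.
rewrite /par; case: pickP => [z /andP [ez /eqP dz]|/(_ w)] //=.
by rewrite evw /= -/dp dw eqxx.
Qed.

Lemma par_eq v w : e v w -> (dp w).+1 = dp v -> par v = w.
Proof.
move=> evw dw; have pv : 0 < dp v by rewrite -dw.
have [h1 h2] := par_spec pv.
exact: (par_uniq e_sym acyc h1 evw h2 dw).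
Qed.

Lemma adj : forall u v, e u v -> dp u = (dp v).+1 \/ dp v = (dp u).+1.
Proof. move=> u v; exact: (dp_adj e_sym Hproper x3 conn). Qed.

Lemma dp0 v : (dp v == 0) = (v == x3).
Proof. exact: dp0_root. Qed.

Lemma child v : 0 < dp v -> ~~ leaf e v -> exists w, [/\ e v w, dp w = (dp v).+1 & par w = v].
Proof.
move=> pv nl; have [ep dpp] := par_spec pv.
have [b [evb nb]] := nonleaf_two nl ep.
exists b; case: (adj evb) => H.
  by move: nb; rewrite (par_eq evb (esym H)) eqxx.
split => //; apply: par_eq => //; by rewrite e_sym.
Qed.

Lemma down u v : e u v -> dp v = (dp u).+1 -> par v = u.
Proof. move=> euv H; apply: par_eq; first by rewrite e_sym. by rewrite H. Qed.

Lemma red_nonleaf v : chi v -> ~~ leaf e v.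
Proof. by move=> cv; apply/negP => /Hleaves; rewrite cv. Qed.

Lemma chi_flip u v : e u v -> chi v = ~~ chi u.
Proof. by move=> /Hproper; case: (chi u); case: (chi v). Qed.

Lemma c0 : chi x0 = false. Proof. exact: Hleaves. Qed.
Lemma c1 : chi x1. Proof. by rewrite (chi_flip e01) c0. Qed.
Lemma c2 : chi x2 = false. Proof. by rewrite (chi_flip e12) c1. Qed.
Lemma c3 : chi x3. Proof. by rewrite (chi_flip e23) c2. Qed.
Lemma c4 : chi x4 = false. Proof. by rewrite (chi_flip e34) c3. Qed.

Lemma d3 : dp x3 = 0. Proof. by apply/eqP; rewrite dp0. Qed.
Lemma d2 : dp x2 = 1.
Proof. by case: (adj e23); rewrite d3. Qed.
Lemma d4 : dp x4 = 1.
Proof. by case: (adj e34); rewrite d3. Qed.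
Lemma d1 : dp x1 = 2.
Proof.
case: (adj e12); rewrite d2 // => -[] /esym /eqP; rewrite dp0 => /eqP H.
by move: n13; rewrite H eqxx.
Qed.
Lemma p1 : par x1 = x2. Proof. apply: down; first by rewrite e_sym. by rewrite d1 d2. Qed.
Lemma d0' : dp x0 = 3.
Proof.
case: (adj e01); rewrite d1 // => H.
have : par x1 = x0 by apply: par_eq; [rewrite e_sym | rewrite d1 H].
by rewrite p1 => H2; move: n02; rewrite H2 eqxx.
Qed.
Lemma p0 : par x0 = x1. Proof. by apply: par_eq; rewrite ?d0' ?d1. Qed.



Lemma RD_of (D : {set T}) : (forall v, v \in D -> ~~ chi v) ->
  (forall t, chi t -> exists2 v, v \in D & e t v) -> RD_set e chi D.
Proof.
move=> Db Dc; apply/setP => u; rewrite /nbhd /red_set !inE; apply/existsP/idP.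
  move=> [v /andP [vD euv]]; have evu : e v u by rewrite e_sym.
  by rewrite (chi_flip evu) Db.
move=> cu; have [v vD euv] := Dc u cu; exists v; by rewrite vD.
Qed.

Definition P : {set T} := [set v | [&& ~~ chi v, (e v x1 ==> (v == x0)),
   (e v x3 ==> (v == x4)) & ((dp v == 5) ==> (par (par (par v)) == x1))]].

Lemma x4x1 : ~~ e x4 x1.
Proof.
apply/negP => H; have : par x1 = x4 by apply: down => //; rewrite d1 d4.
by rewrite p1 => E; move: n24; rewrite E eqxx.
Qed.

Lemma P_cover t : chi t -> exists2 v, v \in P & e t v.
Proof.
move=> ct.
case: (eqVneq t x3) => [->|t3].
  exists x4 => //; rewrite inE c4 eqxx implybT /= d4 /= andbT.
  by rewrite (negbTE x4x1).
case: (eqVneq t x1) => [->|t1].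
  exists x0; last by rewrite e_sym.
  rewrite inE c0 eqxx implybT d0' /= andbT; apply/implyP => H.
  by case: (adj H); rewrite d0' d3.
have pt : 0 < dp t by rewrite lt0n dp0.
case: (boolP ((dp t == 4) && (par (par t) != x1))) => [/andP [/eqP dt4 ppt]|Hc].
  have [ep dpp] := par_spec pt.
  exists (par t) => //.
  have dp3 : dp (par t) = 3 by move: dpp; rewrite dt4 => -[].
  rewrite inE (chi_flip ep) ct dp3 /= andbT; apply/andP; split; apply/implyP => H.
    case: (adj H); rewrite dp3 d1 // => _.
    have : par (par t) = x1 by apply: down; [rewrite e_sym | rewrite dp3 d1].
    by move=> E; rewrite E eqxx in ppt.
  by case: (adj H); rewrite dp3 d3.
have [s [ets ds ps]] := child pt (red_nonleaf ct).
exists s => //.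
rewrite inE (chi_flip ets) ct /=; apply/and3P; split; apply/implyP => H.
- case: (adj H); rewrite d1 => E.
    have : par s = x1 by apply: down; [rewrite e_sym | rewrite d1 E].
    by rewrite ps => E2; rewrite E2 eqxx in t1.
  by move: E; rewrite ds => -[] E0; rewrite -E0 in pt.
- case: (adj H); rewrite d3 ds // => -[] E.
  by move: pt; rewrite E.
- move: H Hc; rewrite ds ps eqSS => /eqP -> /=.
  by rewrite negbK.
Qed.

Lemma P_RD : RD_set e chi P.
Proof.
apply: RD_of; last exact: P_cover.
by move=> v; rewrite inE => /andP [].
Qed.

Lemma RD_cover (M : {set T}) t : RD_set e chi M -> chi t -> exists2 m, m \in M & e t m.
Proof.
move=> HM ct; have : t \in nbhd e M by rewrite HM /red_set inE.
by rewrite /nbhd inE => /existsP [m /andP [mM etm]]; exists m.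
Qed.

Section Forced.
Variable M : {set T}.
Hypotheses (MP : M \subset P) (MRD : RD_set e chi M).

Lemma F0 : x0 \in M.
Proof.
have [m mM em] := RD_cover MRD c1.
have := subsetP MP m mM; rewrite inE => /and4P [_ H _ _].
move: H; rewrite e_sym em /= => /eqP <-; exact: mM.
Qed.

Lemma F4 : x4 \in M.
Proof.
have [m mM em] := RD_cover MRD c3.
have := subsetP MP m mM; rewrite inE => /and4P [_ _ H _].
move: H; rewrite e_sym em /= => /eqP <-; exact: mM.
Qed.

Lemma Fr r : e x4 r -> r != x3 -> exists2 y, y \in M & [/\ e r y, y != x0 & y != x4].
Proof.
move=> e4r r3.
have dr : dp r = 2.
  case: (adj e4r); rewrite d4 // => -[] /esym /eqP; rewrite dp0 => r3'.
  by rewrite r3' in r3.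
have pr : par r = x4 by apply: down => //; rewrite dr d4.
have cr : chi r by rewrite (chi_flip e4r) c4.
have r1 : r != x1.
  apply/negP => /eqP E; move: pr; rewrite E p1 => E2; by move: n24; rewrite E2 eqxx.
have dr0 : 0 < dp r by rewrite dr.
have [y [ery dy py]] := child dr0 (red_nonleaf cr).
have dy0 : 0 < dp y by rewrite dy.
have [q [eyq dq pq]] := child dy0 (R1 e4r ery).
have cq : chi q by rewrite (chi_flip eyq) (chi_flip ery) cr.
have [m mM eqm] := RD_cover MRD cq.
have my : m = y.
  case: (adj eqm) => E; first by rewrite -(par_eq eqm (esym E)) pq.
  have pm : par m = q by apply: down.
  have := subsetP MP m mM; rewrite inE => /and4P [_ _ _ H].
  move: H; rewrite E dq dy dr /= pm pq py => /eqP E2.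
  by rewrite E2 eqxx in r1.
subst m; exists y => //; split => //.
  apply/negP => /eqP E; move: py; rewrite E p0 => E2; by rewrite E2 eqxx in r1.
apply/negP => /eqP E; move: dy; by rewrite E d4 dr.
Qed.

Definition S := x2 |: (M :\ x0 :\ x4).

Lemma x2notP : x2 \notin P.
Proof. by rewrite inE e_sym e12 /= eq_sym (negbTE n02) andbF. Qed.

Lemma card_S : #|S| < #|M|.
Proof.
have x2M : x2 \notin M by apply/negP => /(subsetP MP); apply/negP; exact: x2notP.
rewrite /S cardsU1 !inE (negbTE x2M) !andbF /=.
rewrite (cardsD1 x0 M) F0 (cardsD1 x4 (M :\ x0)) !inE F4.
have : x4 != x0.
  apply/negP => /eqP E; move: d0'; by rewrite -E d4.
by move=> ->.
Qed.

Lemma S_RD : RD_set e chi S.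
Proof.
apply: RD_of.
  move=> v; rewrite !inE => /orP [/eqP ->|/andP [_ /andP [_ vM]]]; first by rewrite c2.
  by have := subsetP MP v vM; rewrite inE => /andP [].
move=> t ct.
case: (eqVneq t x1) => [->|t1]; first by exists x2; rewrite ?e12 // !inE eqxx.
case: (eqVneq t x3) => [->|t3]; first by exists x2; rewrite ?inE ?eqxx // e_sym.
have [m mM etm] := RD_cover MRD ct.
case: (eqVneq m x0) => [E|m0].
  subst m; have e0t : e x0 t by rewrite e_sym.
  have := leaf_uniq leaf0 e01 e0t => E; by rewrite E eqxx in t1.
case: (eqVneq m x4) => [E|m4].
  subst m; have e4t : e x4 t by rewrite e_sym.
  have [y yM [ery y0 y4]] := Fr e4t t3.
  by exists y => //; rewrite !inE y0 y4 yM orbT.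
by exists m => //; rewrite !inE m0 m4 mM orbT.
Qed.

End Forced.

Lemma two_minimal : exists D1 D2 : {set T},
  [/\ minimal_RD_set e chi D1, minimal_RD_set e chi D2 & #|D1| != #|D2|].
Proof.
have [M [MP MRD Mmin]] := minimal_sub P_RD.
have [N [NS NRD Nmin]] := minimal_sub (S_RD MP MRD).
exists M, N; split => //.
have := card_S MP MRD; have := subset_leq_card NS.
move=> h1 h2; rewrite neq_ltn; apply/orP; right; exact: leq_ltn_trans h1 h2.
Qed.

End Main.


Section TD.
Variables (T : finType) (e : rel T).
Hypothesis e_sym : symmetric e.
Variable chi : T -> bool.
Hypothesis Hproper : forall u v, e u v -> chi u != chi v.
Hypothesis noiso : forall v, exists u, e v u.

Definition BD (D : {set T}) := nbhd e D = [set v | ~~ chi v].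

Lemma flip u v : e u v -> chi v = ~~ chi u.
Proof. by move=> /Hproper; case: (chi u); case: (chi v). Qed.

Lemma in_nbhd (D : {set T}) u : (u \in nbhd e D) = [exists v in D, e u v].
Proof. by rewrite /nbhd inE. Qed.

Lemma RD_blue D v : RD_set e chi D -> v \in D -> ~~ chi v.
Proof.
move=> HD vD; have [u evu] := noiso v.
have : u \in nbhd e D by rewrite in_nbhd; apply/existsP; exists v; rewrite vD e_sym.
by rewrite HD /red_set inE (flip evu).
Qed.

Lemma BD_red D v : BD D -> v \in D -> chi v.
Proof.
move=> HD vD; have [u evu] := noiso v.
have : u \in nbhd e D by rewrite in_nbhd; apply/existsP; exists v; rewrite vD e_sym.
by rewrite HD inE (flip evu) negbK.
Qed.

Lemma red_BD : BD [set v | chi v].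
Proof.
apply/setP => u; rewrite in_nbhd inE; apply/existsP/idP.
  by move=> [v /andP [cv euv]]; rewrite inE in cv; have := Hproper euv; rewrite cv; case: (chi u).
move=> cu; have [v euv] := noiso u; exists v; rewrite euv inE (flip euv).
by rewrite cu.
Qed.

Lemma nbhdU A B : nbhd e (A :|: B) = nbhd e A :|: nbhd e B.
Proof.
apply/setP => u; rewrite in_setU !in_nbhd; apply/existsP/orP.
  move=> [v /andP [vAB euv]]; move: vAB; rewrite inE => /orP [vA|vB].
    by left; apply/existsP; exists v; rewrite vA.
  by right; apply/existsP; exists v; rewrite vB.
by move=> [/existsP [v /andP [vA euv]]|/existsP [v /andP [vB euv]]]; exists v; rewrite inE ?vA ?vB ?orbT.
Qed.

Lemma TD_union D B : minimal_RD_set e chi D -> (BD B /\ forall B' : {set T}, B' \proper B -> ~ BD B') ->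
  minimal_TD_set e (D :|: B) /\ #|D :|: B| = #|D| + #|B|.
Proof.
move=> [DRD Dmin] [BBD Bmin].
have disj : D :&: B = set0.
  apply/setP => v; rewrite !inE; apply/negP => /andP [vD vB].
  by have := RD_blue DRD vD; rewrite (BD_red BBD vB).
split; last by rewrite cardsU disj cards0 subn0.
split.
  rewrite /TD_set nbhdU DRD BBD; apply/setP => v; rewrite !inE; by case: (chi v).
move=> D' pD' TD'.
have sD' := proper_sub pD'.
have H1 : RD_set e chi (D' :&: D).
  apply/setP => u; rewrite in_nbhd /red_set inE; apply/existsP/idP.
    move=> [v /andP [vD'D euv]]; move: vD'D; rewrite inE => /andP [_ vD].
    have := RD_blue DRD vD; by rewrite (flip euv); case: (chi u).
  move=> cu; have : u \in nbhd e D' by rewrite TD' inE.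
  rewrite in_nbhd => /existsP [v /andP [vD' euv]]; exists v; rewrite euv inE vD' /= andbT.
  have := subsetP sD' v vD'; rewrite inE => /orP [//|vB].
  by have := BD_red BBD vB; rewrite (flip euv) cu.
have H2 : BD (D' :&: B).
  apply/setP => u; rewrite in_nbhd inE; apply/existsP/idP.
    move=> [v /andP [vD'B euv]]; move: vD'B; rewrite inE => /andP [_ vB].
    have := BD_red BBD vB; by rewrite (flip euv); case: (chi u).
  move=> cu; have : u \in nbhd e D' by rewrite TD' inE.
  rewrite in_nbhd => /existsP [v /andP [vD' euv]]; exists v; rewrite euv inE vD' /= andbT.
  have := subsetP sD' v vD'; rewrite inE => /orP [vD|//].
  by have := RD_blue DRD vD; rewrite (flip euv) (negbTE cu).
have E1 : D' :&: D = D.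
  apply/eqP; case: (boolP (D' :&: D == D)) => // ne; exfalso; apply: (Dmin _ _ H1).
  by rewrite properEneq ne subsetIr.
have E2 : D' :&: B = B.
  apply/eqP; case: (boolP (D' :&: B == B)) => // ne; exfalso; apply: (Bmin _ _ H2).
  by rewrite properEneq ne subsetIr.
move: pD'; rewrite properE => /andP [_ /negP]; apply.
apply/subsetP => v; rewrite inE => /orP [vD|vB].
  by move: vD; rewrite -E1 inE => /andP [].
by move: vB; rewrite -E2 inE => /andP [].
Qed.

Lemma mixed_of D1 D2 : minimal_RD_set e chi D1 -> minimal_RD_set e chi D2 -> #|D1| != #|D2| ->
  mixed e.
Proof.
move=> H1 H2 ne.
have [B [_ BB Bmin]] := minimal_sub red_BD.
have [T1 c1] := TD_union H1 (conj BB Bmin).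
have [T2 c2] := TD_union H2 (conj BB Bmin).
exists (D1 :|: B), (D2 :|: B); split => //.
by rewrite c1 c2 eqn_add2r.
Qed.
End TD.

Unset Implicit Arguments.

Theorem theorem3p32 (T : finType) (e : rel T)
    (e_sym : symmetric e) (e_irr : irreflexive e) (Htree : is_tree e)
    (Hbal : balanced e)
    (chi : T -> bool) (Hproper : proper_2coloring e chi)
    (Hleaves : forall v, leaf e v -> chi v = false)
    (Hheight : tree_height_ge e 4) :
  (exists D1 D2 : {set T},
      [/\ minimal_RD_set e chi D1, minimal_RD_set e chi D2 & #|D1| != #|D2|])
  /\ mixed e.
Proof.
case: Htree => conn acyc.
case: Hheight => v0 [k0 [[[p [pp lp sp]] hmin] k4]].
have [u0 ev0u0] : exists u, e v0 u.
  by case: p pp sp k4 {lp hmin} => [|u p] /= ; [move=> _ <- | move=> /andP [eu _] _ _; exists u].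
have noiso : forall v, exists u, e v u.
  move=> v; have [w [ew vw]] : exists w, connect e v w /\ w != v.
    case: (eqVneq v0 v) => [E|ne]; last by exists v0; rewrite conn.
    exists u0; rewrite conn; split => //; apply/negP => /eqP E2.
    by move: ev0u0; rewrite E2 E e_irr.
  move/connectP: ew => [[|u q] /= pq lq]; first by rewrite -lq eqxx in vw.
  by exists u; case/andP: pq.
have reachL : forall v, exists n, v \in W e [set v | leaf e v] n.
  move=> v; have /connectP [q pq lq] := conn v (last v0 p).
  exists (size q); apply/WP; exists q; split => //; by rewrite -lq inE.
pose h := d reachL.
have hv0 : h v0 = k0.
  apply/eqP; rewrite eqn_leq; apply/andP; split.
    by rewrite -sp; apply: d_walk => //; rewrite inE.
  have [q [pq lq sq]] := d_walk_ex reachL v0.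
  rewrite /h -sq; apply: hmin => //; by move: lq; rewrite inE.
have desc : forall n v, h v = n + 4 -> exists x, h x = 4.
  elim => [|n IH] v hv; first by exists v.
  have hp : 0 < h v by rewrite hv.
  have [w [_ hw]] := d_desc hp.
  apply: (IH w); have hw' : (h w).+1 = (n + 4).+1 by rewrite -addSn -hv.
  by case: hw'.
have [x4 h4] : exists x, h x = 4 by apply: (desc (k0 - 4) v0); rewrite hv0 subnK.
have step : forall x n, h x = n.+1 -> exists y, e x y /\ h y = n.
  move=> x n hx; have hp : 0 < h x by rewrite hx.
  have [y [exy hy]] := d_desc hp.
  have hy' : (h y).+1 = n.+1 by rewrite -hx.
  by exists y; split => //; case: hy'.
have [x3 [e43 h3]] := step x4 3 h4.
have [x2 [e32 h2]] := step x3 2 h3.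
have [x1 [e21 h1]] := step x2 1 h2.
have [x0 [e10 h0]] := step x1 0 h1.
have lip : forall u v, e u v -> h u <= (h v).+1 by move=> u v; apply: d_lip.
have leaf0 : leaf e x0.
  have : x0 \in [set v | leaf e v] by rewrite -(d0 reachL) -/h h0.
  by rewrite inE.
have hne : forall a b, h a != h b -> a != b.
  by move=> a b; apply: contra => /eqP ->.
have R1 : forall r y, e x4 r -> e r y -> ~~ leaf e y.
  move=> r y e4r ery; apply/negP => ly.
  have : h y = 0 by apply/eqP; rewrite /h d0 inE.
  move=> hy; have := lip _ _ ery; have := lip _ _ e4r; rewrite h4 hy.
  move=> a b; rewrite ltnS in a; by have := leq_trans a b.
have e01 : e x0 x1 by rewrite e_sym.
have e34 : e x3 x4 by rewrite e_sym.
have e12 : e x1 x2 by rewrite e_sym.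
have e23 : e x2 x3 by rewrite e_sym.
have n13 : x1 != x3 by apply: hne; rewrite h1 h3.
have n24 : x2 != x4 by apply: hne; rewrite h2 h4.
have n02 : x0 != x2 by apply: hne; rewrite h0 h2.
have [D1 [D2 [M1 M2 ne]]] := two_minimal e_sym conn acyc Hproper Hleaves e01 e12 e23 e34 leaf0 n13 n24 n02 R1.
split; first by exists D1, D2.
exact: (mixed_of e_sym Hproper noiso M1 M2 ne).
Qed.
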